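(* Let $G$ be a nilpotent Chernikov $p$-group whose top is an elementary abelian $p$-group and whose bottom is a single quasi-cyclic $p$-group $M$. Then $G\cong G_k\times H_l$ for some integers $k,l\ge0$, where $H_l$ is the elementary abelian $p$-group of rank $l$ and $G_k$ is the group generated by $M$ and $2k$ elements $\bar h_1,\dots,\bar h_{2k}$, each of order $p$ and commuting with all elements of $M$, whose commutators for $i<j$ are $[\bar h_i,\bar h_j]=a_1$ if $j=k+i$ and $[\bar h_i,\bar h_j]=0$ otherwise, $a_1$ being a fixed element of order $p$ of $M$.
   Context: A Chernikov $p$-group is an extension of a finite direct sum of quasi-cyclic $p$-groups (groups of type $p^\infty$; the bottom, which is the largest divisible abelian subgroup) by a finite $p$-group (the top). Groups are written additively and $[u,v]=u+v-u-v$. *)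

(* Defs.v *)
(* MathComp (boot only, for nat / prime).  Possibly infinite groups are
   given as an explicit carrier type with operations and axioms. *)
From mathcomp Require Import all_boot.
Set Implicit Arguments. Unset Strict Implicit. Unset Printing Implicit Defensive.

Record group := Group {
  carrier :> Type;
  gadd : carrier -> carrier -> carrier;
  gopp : carrier -> carrier;
  gzero : carrier;
  gaddA : forall x y z, gadd x (gadd y z) = gadd (gadd x y) z;
  gadd0 : forall x, gadd gzero x = x;
  gaddN : forall x, gadd (gopp x) x = gzero
}.

Section Defs.
Variable G : group.
Local Infix "+g" := gadd (at level 50, left associativity).
Local Notation "-g x" := (gopp x) (at level 35, right associativity).
Local Notation "0g" := (gzero G).

Fixpoint gmul (n : nat) (x : G) : G :=
  match n with O => 0g | S n => gmul n x +g x end.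

Definition comm (u v : G) : G := u +g v +g -g u +g -g v.

Fixpoint gsum (n : nat) (f : nat -> G) : G :=
  match n with O => 0g | S n => gsum n f +g f n end.

Definition subgroup (H : G -> Prop) : Prop :=
  H 0g /\ (forall x y, H x -> H y -> H (x +g y)) /\ (forall x, H x -> H (-g x)).

Definition normal (H : G -> Prop) : Prop :=
  subgroup H /\ forall g h, H h -> H (g +g h +g -g g).

Definition abelian_sub (H : G -> Prop) : Prop :=
  forall x y, H x -> H y -> x +g y = y +g x.

Definition divisible_sub (H : G -> Prop) : Prop :=
  forall x n, H x -> 0 < n -> exists y, H y /\ gmul n y = x.

Definition is_bottom (M : G -> Prop) : Prop :=
  subgroup M /\ abelian_sub M /\ divisible_sub M /\
  forall D, subgroup D -> abelian_sub D -> divisible_sub D ->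
    forall x, D x -> M x.

(* M is a quasi-cyclic p-group (type p^oo): it is the union of the cyclic
   subgroups <c_n>, where c_0 has order p and p.c_(n+1) = c_n. *)
Definition quasi_cyclic (p : nat) (M : G -> Prop) : Prop :=
  exists c : nat -> G,
    c 0 <> 0g /\ gmul p (c 0) = 0g /\ (forall n, gmul p (c n.+1) = c n) /\
    forall g, M g <-> exists n a, g = gmul a (c n).

(* G/M is a finite elementary abelian p-group *)
Definition top_finite_elem_abelian (p : nat) (M : G -> Prop) : Prop :=
  (exists (n : nat) (t : nat -> G), forall g, exists2 i, i < n & M (-g t i +g g)) /\
  (forall g, M (gmul p g)) /\
  (forall g h, M (comm g h)).

Fixpoint zeta (n : nat) : G -> Prop :=
  match n with
  | O => fun g => g = 0g
  | S n => fun g => forall x, zeta n (comm g x)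
  end.

Definition nilpotent : Prop := exists n, forall g, zeta n g.

Definition has_order (p : nat) (x : G) : Prop := gmul p x = 0g /\ x <> 0g.

(* G = G_k x H_l, in terms of generators: h_0..h_(2k-1) generate G_k together
   with M, e_0..e_(l-1) are a basis of H_l, and every element of G has a
   unique normal form m + sum x_i h_i + sum y_j e_j, with 0 <= x_i,y_j < p. *)
Definition Gk_times_Hl (p : nat) (M : G -> Prop) (a1 : G) (k l : nat)
    (h e : nat -> G) : Prop :=
  (forall i, i < 2 * k -> has_order p (h i)) /\
  (forall i m, i < 2 * k -> M m -> h i +g m = m +g h i) /\
  (forall i j, i < j -> j < 2 * k ->
      comm (h i) (h j) = if j == k + i then a1 else 0g) /\
  (forall i, i < l -> has_order p (e i)) /\
  (forall i m, i < l -> M m -> e i +g m = m +g e i) /\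
  (forall i j, i < l -> j < 2 * k -> e i +g h j = h j +g e i) /\
  (forall i j, i < l -> j < l -> e i +g e j = e j +g e i) /\
  (forall g, exists m x y, M m /\ (forall i, x i < p) /\ (forall i, y i < p) /\
      g = m +g gsum (2 * k) (fun i => gmul (x i) (h i))
            +g gsum l (fun i => gmul (y i) (e i))) /\
  (forall m x y m' x' y', M m -> M m' ->
      (forall i, x i < p) -> (forall i, y i < p) ->
      (forall i, x' i < p) -> (forall i, y' i < p) ->
      m +g gsum (2 * k) (fun i => gmul (x i) (h i))
        +g gsum l (fun i => gmul (y i) (e i)) =
      m' +g gsum (2 * k) (fun i => gmul (x' i) (h i))
        +g gsum l (fun i => gmul (y' i) (e i)) ->
      m = m' /\ (forall i, i < 2 * k -> x i = x' i) /\
      (forall i, i < l -> y i = y' i)).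

End Defs.

(* Main.v *)
Require Import Defs.
From HB Require Import structures.
From mathcomp Require Import all_boot all_algebra.
From mathcomp Require Import zify.
From mathcomp Require Import boolp.
From Stdlib Require Import Classical ClassicalEpsilon.
Set Implicit Arguments. Unset Strict Implicit. Unset Printing Implicit Defensive.

Section GB.
Variable G : group.
Local Infix "+g" := (@gadd G) (at level 50, left associativity).
Local Notation "-g x" := (@gopp G x) (at level 35, right associativity).
Local Notation "0g" := (gzero G).

Lemma gaddNr (x : G) : x +g -g x = 0g.
Proof.
have e: x +g -g x = (-g -g x +g -g x) +g (x +g -g x) by rewrite gaddN gadd0.
rewrite e -gaddA (gaddA (-g x)) gaddN gadd0 gaddN //.
Qed.
Lemma gadd0r (x : G) : x +g 0g = x.
Proof. by rewrite -(gaddN x) gaddA gaddNr gadd0. Qed.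
Lemma gaddKl (x y : G) : -g x +g (x +g y) = y.
Proof. by rewrite gaddA gaddN gadd0. Qed.
Lemma gaddKr (x y : G) : x +g (-g x +g y) = y.
Proof. by rewrite gaddA gaddNr gadd0. Qed.
Lemma gaddNK (x y : G) : x +g y +g -g y = x.
Proof. by rewrite -gaddA gaddNr gadd0r. Qed.
Lemma gaddNKr (x y : G) : x +g -g y +g y = x.
Proof. by rewrite -gaddA gaddN gadd0r. Qed.
Lemma gaddIl (x y z : G) : x +g y = x +g z -> y = z.
Proof. by move=> e; rewrite -(gaddKl x y) e gaddKl. Qed.
Lemma gaddIr (x y z : G) : y +g x = z +g x -> y = z.
Proof. by move=> e; rewrite -(gaddNK y x) e gaddNK. Qed.
Lemma goppK (x : G) : -g -g x = x.
Proof. by apply: (@gaddIr (-g x)); rewrite gaddN gaddNr. Qed.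
Lemma goppD (x y : G) : -g (x +g y) = -g y +g -g x.
Proof. by apply: (@gaddIr (x +g y)); rewrite gaddN gaddA -(gaddA _ _ x) gaddN gadd0r gaddN. Qed.
Lemma gopp0 : -g 0g = 0g.
Proof. by rewrite -{2}(gaddN 0g) gadd0r. Qed.
Lemma gsub_eq0 (x y : G) : x +g -g y = 0g -> x = y.
Proof. by move=> e; rewrite -(gaddNKr x y) e gadd0. Qed.
Lemma gcomm0 (u v : G) : comm u v = 0g -> u +g v = v +g u.
Proof. by rewrite /comm => /gsub_eq0 e; rewrite -(gaddNKr (u +g v) u) e. Qed.
Lemma gcommE (u v : G) : u +g v = v +g u -> comm u v = 0g.
Proof. by rewrite /comm => ->; rewrite gaddNK gaddNr. Qed.

Lemma gmul0 x : gmul 0 x = 0g. Proof. by []. Qed.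
Lemma gmul1 (x : G) : gmul 1 x = x. Proof. by rewrite /= gadd0. Qed.
Lemma gmulD a b (x : G) : gmul (a + b) x = gmul a x +g gmul b x.
Proof. elim: b => [|b IH]; first by rewrite addn0 /= gadd0r. by rewrite addnS /= IH gaddA. Qed.
Lemma gmulM a b (x : G) : gmul (a * b) x = gmul a (gmul b x).
Proof. elim: a => [|a IH] //; by rewrite mulSnr gmulD IH. Qed.
Lemma gmulSl n (x : G) : gmul n.+1 x = x +g gmul n x.
Proof. by rewrite -addn1 addnC gmulD gmul1. Qed.
Lemma gmul_zero n : gmul n 0g = 0g.
Proof. by elim: n => //= n ->; rewrite gadd0. Qed.
Lemma gmul_commute n (a b : G) : a +g b = b +g a -> gmul n a +g b = b +g gmul n a.
Proof.
move=> c; elim: n => [|n IHn] /=; first by rewrite gadd0 gadd0r.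
by rewrite -gaddA c gaddA IHn -gaddA.
Qed.
Lemma gmul_addC n (x y : G) : x +g y = y +g x -> gmul n (x +g y) = gmul n x +g gmul n y.
Proof.
move=> cxy; elim: n => [|n IH] /=; first by rewrite gadd0.
have cyx : gmul n y +g x = x +g gmul n y by rewrite gmul_commute.
by rewrite IH !gaddA -(gaddA (gmul n x)) cyx gaddA.
Qed.
Lemma gmul_opp n (x : G) : gmul n (-g x) = -g gmul n x.
Proof.
elim: n => [|n IH] /=; first by rewrite gopp0.
by rewrite IH -goppD -gmulSl.
Qed.
Lemma gmulB a b (x : G) : b <= a -> gmul (a - b) x = gmul a x +g -g gmul b x.
Proof. by move=> ba; rewrite -{2}(subnK ba) gmulD gaddNK. Qed.
Lemma gmul_comm2 a b (x : G) : gmul a x +g gmul b x = gmul b x +g gmul a x.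
Proof. by rewrite -!gmulD addnC. Qed.
End GB.

Section QC.
Variables (G : group) (p : nat) (M : G -> Prop) (c : nat -> G).
Local Infix "+g" := (@gadd G) (at level 50, left associativity).
Local Notation "-g x" := (@gopp G x) (at level 35, right associativity).
Local Notation "0g" := (gzero G).
Hypothesis pP : prime p.
Hypothesis c0nz : c 0 <> 0g.
Hypothesis cp0 : gmul p (c 0) = 0g.
Hypothesis cS : forall n, gmul p (c n.+1) = c n.
Hypothesis Mc : forall g, M g <-> exists n a, g = gmul a (c n).

Lemma cpow s n : gmul (p ^ s) (c (n + s)) = c n.
Proof.
elim: s => [|s IH]; first by rewrite addn0 expn0 gmul1.
by rewrite expnSr gmulM addnS cS IH.
Qed.
Lemma cdvd0 a n : p ^ n.+1 %| a -> gmul a (c n) = 0g.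
Proof.
case/dvdnP=> q ->; have := cpow n 0; rewrite add0n => e; rewrite gmulM expnS gmulM e cp0 gmul_zero //.
Qed.
Lemma cnorm z : M z -> z = 0g \/ exists u t, coprime p u /\ z = gmul u (c t).
Proof.
case/Mc=> n [a ->]; case: (posnP a) => [->|a0]; first by left.
case: (pfactor_coprime pP a0) => u cu ->.
set s := logn p a.
case: (leqP s n) => sn.
  right; exists u, (n - s); split=> //.
  by rewrite gmulM -{1}(subnK sn) cpow.
left; apply: cdvd0; apply: dvdn_mull; exact: dvdn_exp2l.
Qed.

Lemma div_full (D : G -> Prop) :
  (forall x, D x -> M x) -> D 0g -> (forall x y, D x -> D y -> D (x +g y)) ->
  (forall x, D x -> D (-g x)) ->
  (forall x n, D x -> 0 < n -> exists y, D y /\ gmul n y = x) ->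
  forall x0, D x0 -> x0 <> 0g -> forall m, M m -> D m.
Proof.
move=> DM D0 DD DN Ddiv x0 Dx0 x0nz.
have Dmul : forall n x, D x -> D (gmul n x) by move=> n x Dx; elim: n => //= n IH; exact: DD.
have pgt0 : 0 < p by exact: prime_gt0.
have expn_gt0' : forall n, 0 < p ^ n by move=> n; rewrite expn_gt0 pgt0.
have DcJ : forall J, D (c J).
  move=> J; have [y [Dy ey]] := Ddiv x0 (p ^ J) Dx0 (expn_gt0' J).
  case: (cnorm (DM _ Dy)) => [y0|[u [t [cu yut]]]].
    by case: x0nz; rewrite -ey y0 gmul_zero.
  case: (leqP J t) => Jt; last first.
    case: x0nz; rewrite -ey yut -gmulM; apply: cdvd0.
    by apply: dvdn_mulr; apply: dvdn_exp2l.
  have cm : coprime (p ^ t.+1) u by rewrite coprime_sym coprimeXr // coprime_sym.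
  case: (Bezoutl u (expn_gt0' t.+1)) => a _.
  rewrite (eqP cm) => /cdvd0; rewrite gmulD gmul1 gmulM -yut => e.
  have Dct : D (c t).
    have -> : c t = -g gmul a y by apply: (@gaddIr _ (gmul a y)); rewrite e gaddN.
    by apply: DN; apply: Dmul.
  by rewrite -(cpow (t - J) J) (subnKC Jt); apply: Dmul.
move=> m /Mc [n [a ->]]; exact: Dmul.
Qed.
End QC.

Section Central.
Variables (G : group) (p : nat) (M : G -> Prop) (c : nat -> G).
Local Infix "+g" := (@gadd G) (at level 50, left associativity).
Local Notation "-g x" := (@gopp G x) (at level 35, right associativity).
Local Notation "0g" := (gzero G).
Hypothesis pP : prime p.
Hypothesis c0nz : c 0 <> 0g.
Hypothesis cp0 : gmul p (c 0) = 0g.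
Hypothesis cS : forall n, gmul p (c n.+1) = c n.
Hypothesis Mc : forall g, M g <-> exists n a, g = gmul a (c n).
Hypothesis Mn : normal M.
Hypothesis Mab : abelian_sub M.
Hypothesis Mdiv : divisible_sub M.
Hypothesis nilp : nilpotent G.

Let M0 : M 0g. Proof. by case: Mn => [[]]. Qed.
Let MD x y : M x -> M y -> M (x +g y). Proof. by case: Mn => [[_ [H _]] _]; apply: H. Qed.
Let MN x : M x -> M (-g x). Proof. by case: Mn => [[_ [_ H]] _]; apply: H. Qed.
Let MJ g x : M x -> M (g +g x +g -g g). Proof. by case: Mn => _; apply. Qed.

Lemma zeta_iter (g : G) n j m : @zeta G (n + j) m -> @zeta G j (iter n (fun x => comm x g) m).
Proof.
elim: n m => [|n IH] m //= => /(_ g) /IH.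
by rewrite -iterSr.
Qed.

Lemma central (g m : G) : M m -> m +g g = g +g m.
Proof.
set d := fun x => comm x g.
have dE x : d x = x +g (g +g -g x +g -g g) by rewrite /d /comm !gaddA.
have dM x : M x -> M (d x) by move=> Mx; rewrite dE; apply: MD => //; apply: MJ; apply: MN.
have dD a b : M a -> M b -> d (a +g b) = d a +g d b.
  move=> Ma Mb; rewrite !dE goppD.
  have -> : g +g (-g b +g -g a) +g -g g = (g +g -g b +g -g g) +g (g +g -g a +g -g g).
    by rewrite !gaddA gaddNKr.
  have sw : forall a b X Y, M b -> M X -> M Y -> a +g b +g (X +g Y) = a +g Y +g (b +g X).
    move=> a' b' X Y Mb' MX MY.
    have e1 : a' +g b' +g (X +g Y) = a' +g ((b' +g X) +g Y) by rewrite !gaddA.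
    by rewrite e1 (Mab (MD Mb' MX) MY) !gaddA.
  by apply: sw => //; apply: MJ; apply: MN.
have Mmul : forall n x, M x -> M (gmul n x) by move=> n x Mx; elim: n => //= n IH; exact: MD.
have d0 : d 0g = 0g by rewrite dE gopp0 gadd0r gaddNr gadd0.
have itM j x : M x -> M (iter j d x) by elim: j => //= j IH Mx; apply: dM; apply: IH.
have itD j a b : M a -> M b -> iter j d (a +g b) = iter j d a +g iter j d b.
  by move=> Ma Mb; elim: j => //= j ->; apply: dD; apply: itM.
have it0 j : iter j d 0g = 0g by elim: j => //= j ->.
have itN j a : M a -> iter j d (-g a) = -g iter j d a.
  move=> Ma; apply: (@gaddIr _ (iter j d a)); rewrite gaddN -itD ?gaddN //; exact: MN.
have itmul j n a : M a -> iter j d (gmul n a) = gmul n (iter j d a).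
  move=> Ma; elim: n => [|n IH] /=; first exact: it0.
  by rewrite itD ?IH //; apply: Mmul.
case: nilp => N HN.
have itN0 x : M x -> iter N d x = 0g.
  by move=> _; have := @zeta_iter g N 0 x; rewrite addn0 => /(_ (HN x)).
pose P := fun i => forall x, M x -> iter i.+1 d x = 0g.
have step : forall j, P j.+1 -> P j.
  move=> j Pj x Mx; apply: NNPP => nz.
  pose D : G -> Prop := fun y => exists m1, M m1 /\ y = iter j.+1 d m1.
  have DM : forall m, M m -> D m.
    move=> m0 Mm0.
    apply: (@div_full G p M c pP cp0 cS Mc D _ _ _ _ _ (iter j.+1 d x) _ nz m0 Mm0).
    - by move=> y [m1 [Mm ->]]; apply: itM.
    - by exists 0g; split=> //; rewrite it0.
    - by move=> y z [m1 [Mm ->]] [m2 [Mm' ->]]; exists (m1 +g m2); split; [apply: MD|rewrite itD].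
    - by move=> y [m1 [Mm ->]]; exists (-g m1); split; [apply: MN|rewrite itN].
    - move=> y n [m1 [Mm ->]] n0; have [m3 [Mm3 e]] := Mdiv Mm n0.
      by exists (iter j.+1 d m3); split; [exists m3|rewrite -itmul // e].
    - by exists x.
  have dz : forall y, M y -> d y = 0g.
    move=> y My; have [m1 [Mm ->]] := DM y My.
    by have := Pj _ Mm; rewrite /= -iterS.
  by apply: nz; rewrite iterS dz //; apply: itM.
have PN : P N by move=> y My; rewrite iterS itN0 // d0.
have Pd : forall i, P (N - i).
  elim=> [|i IH]; first by rewrite subn0.
  rewrite subnS; move: IH; case: (N - i) => [|k] //= IH; exact: step.
move=> Mm; have := Pd N _ Mm; rewrite subnn /= => e.
exact: gcomm0.
Qed.
End Central.

Local Infix "+g" := gadd (at level 50, left associativity).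
Local Notation "-g x" := (gopp x) (at level 35, right associativity).

Record qhyp (G : group) (M : G -> Prop) : Prop :=
  QH { qh_norm : normal M; qh_comm : forall g h, M (comm g h) }.

Definition cong (G : group) (M : G -> Prop) (x y : G) := M (-g x +g y).
Definition canon (G : group) (M : G -> Prop) (g : G) : G :=
  epsilon (inhabits (gzero G)) (fun r => cong M r g).

Section QuotLemmas.
Variables (G : group) (M : G -> Prop) (H : qhyp M).
Local Notation "0g" := (gzero G).
Let M0 : M 0g. Proof. by case: H => [[[]]]. Qed.
Let MD x y : M x -> M y -> M (x +g y). Proof. by case: H => [[[_ [HH _]] _]] _; apply: HH. Qed.
Let MN x : M x -> M (-g x). Proof. by case: H => [[[_ [_ HH]] _]] _; apply: HH. Qed.
Let MJ g x : M x -> M (g +g x +g -g g). Proof. by case: H => [[_ HH]] _; apply: HH. Qed.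

Lemma cong_refl x : cong M x x. Proof. by rewrite /cong gaddN. Qed.
Lemma cong_sym x y : cong M x y -> cong M y x.
Proof. by rewrite /cong => /MN; rewrite goppD goppK. Qed.
Lemma cong_trans x y z : cong M x y -> cong M y z -> cong M x z.
Proof. by rewrite /cong => a b; have := MD a b; rewrite -gaddA gaddKr. Qed.
Lemma cong_add x y x' y' : cong M x x' -> cong M y y' -> cong M (x +g y) (x' +g y').
Proof.
rewrite /cong goppD => a b.
have e : -g y +g -g x +g (x' +g y') = (-g y +g (-g x +g x') +g -g (-g y)) +g (-g y +g y').
  by rewrite goppK !gaddA gaddNK.
by rewrite e; apply: MD => //; apply: MJ.
Qed.
Lemma cong_opp x x' : cong M x x' -> cong M (-g x) (-g x').
Proof.
rewrite /cong goppK => a.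
have e : x +g -g x' = x +g (-g (-g x +g x')) +g -g x by rewrite goppD goppK gaddA gaddNK.
by rewrite e; apply: MJ; apply: MN.
Qed.
Lemma cong_M x : M x -> cong M x 0g.
Proof. by rewrite /cong gadd0r; apply: MN. Qed.
Lemma cong_M' x : cong M x 0g -> M x.
Proof. by rewrite /cong gadd0r => /MN; rewrite goppK. Qed.
Lemma cong_comm x y : cong M (x +g y) (y +g x).
Proof.
rewrite /cong goppD.
have e : -g y +g -g x +g (y +g x) = comm (-g y) (-g x) by rewrite /comm !goppK !gaddA.
by rewrite e; case: H.
Qed.

Lemma canonE g : cong M (canon M g) g.
Proof. by apply: (epsilon_spec (inhabits (gzero G)) (fun r => cong M r g)); exists g; apply: cong_refl. Qed.
Lemma canon_eq x y : cong M x y -> canon M x = canon M y.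
Proof.
move=> cxy; rewrite /canon.
have -> : (fun r => cong M r x) = (fun r => cong M r y); last by [].
apply: funext => r; apply: propext; split.
  by move=> crx; apply: cong_trans crx cxy.
by move=> cry; apply: cong_trans cry (cong_sym cxy).
Qed.
Lemma canon_idem g : canon M (canon M g) = canon M g.
Proof. exact: canon_eq (canonE g). Qed.
End QuotLemmas.

Definition Qt (G : group) (M : G -> Prop) (H : qhyp M) : Type := {r : G | canon M r = r}.
Definition qproj (G : group) (M : G -> Prop) (H : qhyp M) (g : G) : Qt H :=
  exist _ (canon M g) (canon_idem H g).
Definition qval (G : group) (M : G -> Prop) (H : qhyp M) (q : Qt H) : G := proj1_sig q.

Section QuotOps.
Variables (G : group) (M : G -> Prop) (H : qhyp M).
Lemma qproj_eq x y : cong M x y -> qproj H x = qproj H y.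
Proof.
move=> cxy; rewrite /qproj; move: (canon_idem H x) (canon_idem H y).
rewrite (canon_eq H cxy) => p1 p2; congr exist; exact: Prop_irrelevance.
Qed.
Lemma qproj_eq' x y : qproj H x = qproj H y -> cong M x y.
Proof.
move=> e; have := congr1 (@qval _ _ H) e; rewrite /qval /= => e'.
have c1 := cong_sym H (canonE H x); rewrite e' in c1.
exact (cong_trans H c1 (canonE H y)).
Qed.
Lemma qvalK (q : Qt H) : qproj H (qval q) = q.
Proof.
case: q => r pr; rewrite /qproj /qval /=; move: (canon_idem H r); rewrite pr => p1.
by congr exist; exact: Prop_irrelevance.
Qed.
Lemma qval_cong g : cong M (qval (qproj H g)) g.
Proof. exact: canonE. Qed.

Definition qadd (a b : Qt H) := qproj H (qval a +g qval b).
Definition qopp (a : Qt H) := qproj H (-g qval a).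
Definition qzero := qproj H (gzero G).

Lemma qprojD x y : qproj H (x +g y) = qadd (qproj H x) (qproj H y).
Proof. by apply: qproj_eq; apply: cong_add => //; apply: cong_sym => //; apply: qval_cong. Qed.
Lemma qprojN x : qproj H (-g x) = qopp (qproj H x).
Proof. by apply: qproj_eq; apply: cong_opp => //; apply: cong_sym => //; apply: qval_cong. Qed.

Lemma qaddA : associative qadd.
Proof.
move=> a b c; rewrite -[a]qvalK -[b]qvalK -[c]qvalK -!qprojD; apply: qproj_eq.
by rewrite gaddA; apply: cong_refl.
Qed.
Lemma qaddC : commutative qadd.
Proof.
move=> a b; rewrite -[a]qvalK -[b]qvalK -!qprojD; apply: qproj_eq; exact: cong_comm.
Qed.
Lemma qadd0 : left_id qzero qadd.
Proof. by move=> a; rewrite -[a]qvalK /qzero -qprojD gadd0. Qed.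
Lemma qaddN : left_inverse qzero qopp qadd.
Proof. by move=> a; rewrite -[a]qvalK -qprojN -qprojD gaddN. Qed.
End QuotOps.

HB.instance Definition _ (G : group) (M : G -> Prop) (H : qhyp M) := gen_eqMixin (Qt H).
HB.instance Definition _ (G : group) (M : G -> Prop) (H : qhyp M) := gen_choiceMixin (Qt H).
HB.instance Definition _ (G : group) (M : G -> Prop) (H : qhyp M) :=
  GRing.isZmodule.Build (Qt H) (@qaddA G M H) (@qaddC G M H) (@qadd0 G M H) (@qaddN G M H).
Import GRing.Theory.

Section Darboux.
Variable Q : zmodType.
Variable p' : nat.
Local Notation p := p'.+2.
Hypothesis pP : prime p.
Variable om : Q -> Q -> 'I_p.
Local Open Scope ring_scope.
Hypothesis charQ : forall x : Q, x *+ p = 0.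
Hypothesis omDl : forall x y z, om (x + y) z = om x z + om y z.
Hypothesis omN : forall x y, om y x = - om x y.
Hypothesis omxx : forall x, om x x = 0.

Lemma omDr x y z : om x (y + z) = om x y + om x z.
Proof. by rewrite omN omDl opprD -!omN. Qed.
Lemma om0l y : om 0 y = 0.
Proof. by apply: (@addrI _ (om 0 y)); rewrite -omDl !addr0. Qed.
Lemma omNl x y : om (- x) y = - om x y.
Proof. by apply: (@addrI _ (om x y)); rewrite -omDl !subrr om0l. Qed.
Lemma omMnl x y n : om (x *+ n) y = om x y *+ n.
Proof. by elim: n => [|n IH]; rewrite ?mulr0n ?om0l // !mulrS omDl IH. Qed.
Lemma omBl x y z : om (x - y) z = om x z - om y z.
Proof. by rewrite omDl omNl. Qed.
Lemma om_sum (I : Type) (r : seq I) (P : pred I) (F : I -> Q) y :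
  om (\sum_(i <- r | P i) F i) y = \sum_(i <- r | P i) om (F i) y.
Proof. by apply: (big_morph (fun x => om x y)) => [a b|]; rewrite ?omDl ?om0l. Qed.

Lemma mulrn_modp (x : Q) n : x *+ n = x *+ (n %% p).
Proof. by rewrite {1}(divn_eq n p) mulrnDr mulrnA charQ add0r. Qed.
Lemma mulrn_dvd0 (x : Q) n : (p %| n)%N -> x *+ n = 0.
Proof. by move=> d; rewrite mulrn_modp (eqP d). Qed.
Lemma oppQ (x : Q) : - x = x *+ p'.+1.
Proof. by apply: (@addrI _ x); rewrite subrr -mulrS charQ. Qed.
Lemma natZ0 n : (n%:R : 'I_p) = 0 -> (p %| n)%N.
Proof. by move/(congr1 val); rewrite Zp_nat /= => e; apply/eqP. Qed.
Lemma inv_mod a : ~~ (p %| a)%N -> exists b, (p %| a * b + 1)%N.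
Proof.
move=> na; have [b _] := Bezoutl a (isT : (0 < p)%N).
have : coprime p a by rewrite prime_coprime.
by rewrite /coprime => /eqP ->; exists b; rewrite addnC mulnC.
Qed.

Definition LC n (F : nat -> Q) (x : nat -> nat) := \sum_(0 <= i < n) F i *+ x i.
Lemma LC_ext n F G x y : (forall i, (i < n)%N -> F i = G i /\ x i = y i) -> LC n F x = LC n G y.
Proof. by move=> e; apply: eq_big_nat => i /andP [_ /e [-> ->]]. Qed.
Lemma LC0 F x : LC 0 F x = 0. Proof. by rewrite /LC big_geq. Qed.
Lemma LCS n F x : LC n.+1 F x = LC n F x + F n *+ x n.
Proof. by rewrite /LC big_nat_recr. Qed.
Lemma LC_add n F x y : LC n F x + LC n F y = LC n F (fun i => x i + y i)%N.
Proof. by rewrite /LC -big_split; apply: eq_bigr => i _; rewrite mulrnDr. Qed.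
Lemma LC_mul n F x b : LC n F x *+ b = LC n F (fun i => x i * b)%N.
Proof. by rewrite /LC -sumrMnl; apply: eq_bigr => i _; rewrite mulrnA. Qed.
Lemma LC_opp n F x : - LC n F x = LC n F (fun i => x i * p'.+1)%N.
Proof. by rewrite oppQ LC_mul. Qed.
Lemma om_LC n F x y : om (LC n F x) y = \sum_(0 <= i < n) om (F i) y *+ x i.
Proof. by rewrite /LC om_sum; apply: eq_bigr => i _; rewrite omMnl. Qed.

Definition ins (T : Type) k (a b : T) (f : nat -> T) i :=
  if i == 0%N then a else if (i <= k)%N then f i.-1 else if i == k.+1 then b else f i.-2.

Lemma LC_ins k n f x u v a b : (k <= n)%N ->
  LC n.+2 (ins k u v f) (ins k a b x) = u *+ a + v *+ b + LC n f x.
Proof.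
move=> kn; rewrite /LC.
have h1 : (1 <= k.+1)%N by [].
have h2 : (k.+1 <= n.+2)%N by lia.
have h3 : (k.+1 <= k.+2)%N by [].
have h4 : (k.+2 <= n.+2)%N by lia.
rewrite (@big_cat_nat _ _ _ 1 0 n.+2) // big_nat1.
rewrite (@big_cat_nat _ _ _ k.+1 1 n.+2) //.
rewrite (@big_cat_nat _ _ _ k.+2 k.+1 n.+2) // big_nat1.
rewrite (@big_cat_nat _ _ _ k 0 n) //.
rewrite big_add1 /= big_add1 /= big_add1 /=.
have -> : ins k u v f k.+1 *+ ins k a b x k.+1 = v *+ b.
  by rewrite /ins /= ltnn eqxx.
have -> : ins k u v f 0 *+ ins k a b x 0 = u *+ a by [].
rewrite (@eq_big_nat _ _ _ 0 k _ (fun i => f i *+ x i)); last first.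
  by move=> i /andP [_ ik]; rewrite /ins /= ik.
rewrite (@eq_big_nat _ _ _ k n _ (fun i => f i *+ x i)); last first.
  move=> i /andP [ki _]; rewrite /ins /=.
  have -> : (i.+2 <= k)%N = false by lia.
  by have -> : (i.+2 == k.+1) = false by lia.
by rewrite -addrA; congr (_ + _); rewrite addrCA.
Qed.

Definition subg (K : Q -> Prop) :=
  K 0 /\ (forall x y, K x -> K y -> K (x + y)) /\ (forall x, K x -> K (- x)).
Definition reps (K : Q -> Prop) (t : nat -> Q) N :=
  forall x, K x -> exists2 i, (i < N)%N & x = t i.
Definition indep n F := forall x, LC n F x = 0 -> forall i, (i < n)%N -> (p %| x i)%N.
Definition spans (K : Q -> Prop) n F := forall g, K g -> exists x, g = LC n F x.

Lemma abel K t N : subg K -> reps K t N ->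
  exists l e, (forall i, (i < l)%N -> K (e i)) /\ spans K l e /\ indep l e.
Proof.
move=> sK rK.
have G : forall j, (j <= N)%N -> exists l e, (forall i, (i < l)%N -> K (e i)) /\ indep l e /\
    (forall i, (i < j)%N -> K (t i) -> exists x, t i = LC l e x).
  elim=> [|j IH] jN.
    by exists 0%N, (fun _ => 0); split; [by []|split; [move=> x _ i|]].
  have [l [e [eK [ei esp]]]] := IH (ltnW jN).
  case: (classic (K (t j) /\ ~ exists x, t j = LC l e x)) => [[Ktj ns]|H].
    pose e' i := if (i < l)%N then e i else t j.
    have eLC x : LC l e' x = LC l e x by apply: LC_ext => i0 i0l; rewrite /e' i0l.
    exists l.+1, e'; split; [|split].
    - by move=> i il; rewrite /e'; case: ifP => [il'|_]; [exact: eK|exact: Ktj].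
    - move=> x; rewrite LCS eLC /e' ltnn => e0 i il.
      case: (boolP (p %| x l)%N) => dl.
        have Lz : LC l e x = 0 by rewrite (mulrn_dvd0 _ dl) addr0 in e0.
        rewrite ltnS leq_eqVlt in il; case/orP: il => [/eqP -> //|il].
        exact: ei Lz i il.
      exfalso; have [b hb] := inv_mod dl; apply: ns.
      exists (fun i => x i * b)%N; rewrite -LC_mul.
      have h1 : t j *+ x l = - LC l e x by apply/eqP; rewrite -addr_eq0 addrC e0.
      have h2 : t j *+ (x l * b) + t j = 0 by rewrite -[X in _ + X]mulr1n -mulrnDr mulrn_dvd0.
      have h3 : t j = - (t j *+ (x l * b)) by apply/eqP; rewrite -addr_eq0 addrC h2.
      by rewrite {1}h3 mulrnA h1 mulNrn opprK.
    - move=> i ij Kti; rewrite ltnS leq_eqVlt in ij; case/orP: ij => [/eqP -> | ij].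
        exists (fun i => if i == l then 1 else 0)%N; rewrite LCS eqxx mulr1n /e' ltnn.
        rewrite [LC _ _ _]/LC big_nat_cond big1 ?add0r // => i0 /andP[/andP[_ i0l] _].
        by rewrite (ltn_eqF i0l) mulr0n.
      have [x ->] := esp i ij Kti.
      exists (fun i => if (i < l)%N then x i else 0)%N; rewrite LCS ltnn mulr0n addr0.
      by apply: LC_ext => i0 i0l; rewrite /e' i0l.
  exists l, e; split=> //; split=> // i ij Kti.
  rewrite ltnS leq_eqVlt in ij; case/orP: ij => [/eqP eij|ij]; last exact: esp.
  subst i; case: (classic (exists x, t j = LC l e x)) => // nex.
  by case: H.
have [l [e [eK [ei esp]]]] := G N (leqnn N).
exists l, e; split=> //; split=> // g Kg.
have [i iN eg] := rK g Kg; rewrite eg in Kg *; exact: esp.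
Qed.

Lemma ins_cases k i : [\/ i = 0%N, (0 < i <= k)%N, i = k.+1 | (k.+1 < i)%N].
Proof.
case: (ltngtP i k.+1); last by move=> ->; constructor 3.
  by move=> h; case: (posnP i) => h2; [constructor 1| constructor 2]; lia.
by constructor 4.
Qed.
Lemma ins_0 (T : Type) k (a b : T) f : ins k a b f 0 = a. Proof. by []. Qed.
Lemma ins_lo (T : Type) k (a b : T) f i : (0 < i <= k)%N -> ins k a b f i = f i.-1.
Proof. by case/andP=> i0 ik; rewrite /ins ik; case: i i0 {ik}. Qed.
Lemma ins_mid (T : Type) k (a b : T) f : ins k a b f k.+1 = b.
Proof. by rewrite /ins /= ltnn eqxx. Qed.
Lemma ins_hi (T : Type) k (a b : T) f i : (k.+1 < i)%N -> ins k a b f i = f i.-2.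
Proof.
move=> h; rewrite /ins.
have -> : (i == 0%N) = false by lia.
have -> : (i <= k)%N = false by lia.
by have -> : (i == k.+1) = false by lia.
Qed.
Lemma ins_split k (x : nat -> nat) i :
  x i = ins k (x 0%N) (x k.+1) (fun i => if (i < k)%N then x i.+1 else x i.+2) i.
Proof.
case: (ins_cases k i) => [->|h|->|h]; rewrite ?ins_0 ?ins_mid //.
  rewrite ins_lo //; have -> : (i.-1 < k)%N by lia.
  by case: i h => // i.
rewrite ins_hi //; have -> : (i.-2 < k)%N = false by lia.
by case: i h => // [[|i]].
Qed.

Definition FF (k l : nat) (h e : nat -> Q) i := if (i < 2 * k)%N then h i else e (i - 2 * k)%N.

Lemma FF_ins k l u v h e i : FF k.+1 l (ins k u v h) e i = ins k u v (FF k l h e) i.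
Proof.
rewrite /FF; case: (ins_cases k i) => [->|hi|->|hi].
- by rewrite !ins_0.
- rewrite !ins_lo //; have -> : (i < 2 * k.+1)%N by lia.
  by have -> : (i.-1 < 2 * k)%N by lia.
- by rewrite !ins_mid; have -> : (k.+1 < 2 * k.+1)%N by lia.
- rewrite !ins_hi //; case: ifP => h1; case: ifP => h2 //; try lia.
  by congr e; lia.
Qed.

Definition Str K k l h e := (forall i, (i < 2 * k)%N -> K (h i)) /\
  (forall i, (i < l)%N -> K (e i)) /\
  (forall i j, (i < j)%N -> (j < 2 * k)%N -> om (h i) (h j) = if j == (k + i)%N then 1 else 0) /\
  (forall i j, (i < l)%N -> (j < 2 * k)%N -> om (e i) (h j) = 0) /\
  (forall i j, (i < l)%N -> (j < l)%N -> om (e i) (e j) = 0) /\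
  spans K (2 * k + l) (FF k l h e) /\ indep (2 * k + l) (FF k l h e).

Lemma natZ_dvd n : (p %| n)%N -> (n%:R : 'I_p) = 0.
Proof. by move=> d; apply: val_inj; rewrite Zp_nat /= (eqP d). Qed.
Lemma omNr x y : om x (- y) = - om x y.
Proof. by rewrite omN omNl -omN. Qed.
Lemma omMnr x y n : om x (y *+ n) = om x y *+ n.
Proof. by rewrite omN omMnl -mulNrn -omN. Qed.
Lemma subg_mulrn K x n : subg K -> K x -> K (x *+ n).
Proof. by case=> K0 [KD _] Kx; elim: n => [|n IH]; rewrite ?mulr0n ?mulrS //; apply: KD. Qed.

Lemma pair_step K u v k l h e : subg K -> K u -> K v -> om u v = 1 ->
  Str (fun g => K g /\ om g u = 0 /\ om g v = 0) k l h e ->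
  Str K k.+1 l (ins k u v h) e.
Proof.
move=> sK Ku Kv uv [hK [eK [hh [eh [ee [sp ind]]]]]].
have vu : om v u = -1 by rewrite omN uv.
have hu i : (i < 2 * k)%N -> om (h i) u = 0 /\ om (h i) v = 0 /\ om u (h i) = 0 /\ om v (h i) = 0.
  move=> ik; have [_ [a b]] := hK i ik.
  by rewrite a b omN a oppr0 omN b oppr0.
have FK i : (i < 2 * k + l)%N -> K (FF k l h e i) /\ om (FF k l h e i) u = 0 /\ om (FF k l h e i) v = 0.
  move=> il; rewrite /FF; case: ifP => h1.
    by have := hK i h1.
  by have := eK (i - 2 * k)%N; apply; lia.
have Nn : (2 * k.+1 + l = (2 * k + l).+2)%N by lia.
split; [|split; [|split; [|split; [|split; [|split]]]]].
- have hK0 i : (i < 2 * k)%N -> K (h i) by move=> /hK [].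
  move=> i ik; case: (ins_cases k i) => [->|hi|->|hi]; rewrite ?ins_0 ?ins_mid //.
    by rewrite ins_lo //; apply: hK0; lia.
  by rewrite ins_hi //; apply: hK0; lia.
- by move=> i il; have [] := eK i il.
- move=> i j.
  case: (ins_cases k i) => [->|hi|->|hi]; case: (ins_cases k j) => [->|hj|->|hj]; move=> ij jk;
    rewrite ?ins_0 ?ins_mid ?(ins_lo _ _ _ hi) ?(ins_lo _ _ _ hj) ?(ins_hi _ _ _ hi) ?(ins_hi _ _ _ hj);
    try lia.
  + have [_ [_ [-> _]]] := hu j.-1 ltac:(lia).
    by have -> : (j == (k.+1 + 0)%N) = false by lia.
  + by rewrite uv addn0 eqxx.
  + have [_ [_ [-> _]]] := hu j.-2 ltac:(lia).
    by have -> : (j == (k.+1 + 0)%N) = false by lia.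
  + rewrite hh; try lia.
    have -> : (j == (k.+1 + i)%N) = false by lia.
    by have -> : (j.-1 == (k + i.-1)%N) = false by lia.
  + have [_ [-> _]] := hu i.-1 ltac:(lia).
    by have -> : (k.+1 == (k.+1 + i)%N) = false by lia.
  + rewrite hh; try lia.
    case: (eqVneq j (k.+1 + i)%N) => e1.
      by have -> : (j.-2 == (k + i.-1)%N) by lia.
    by have -> : (j.-2 == (k + i.-1)%N) = false by lia.
  + have [_ [_ [_ ->]]] := hu j.-2 ltac:(lia).
    by have -> : (j == (k.+1 + k.+1)%N) = false by lia.
  + rewrite hh; try lia.
    have -> : (j == (k.+1 + i)%N) = false by lia.
    by have -> : (j.-2 == (k + i.-2)%N) = false by lia.
- move=> i j il jk; have [_ [eu ev]] := eK i il.
  case: (ins_cases k j) => [->|hj|->|hj]; rewrite ?ins_0 ?ins_mid //.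
    by rewrite ins_lo // eh //; lia.
  by rewrite ins_hi // eh //; lia.
- by [].
- move=> g Kg.
  pose a := nat_of_ord (om g v); pose b := nat_of_ord (om g u).
  pose g' := g - u *+ a + v *+ b.
  have Kg' : K g' /\ om g' u = 0 /\ om g' v = 0.
    split.
      case: (sK) => _ [KD KN]; apply: (KD); first apply: (KD) => //.
        by apply: (KN); apply: subg_mulrn.
      by apply: subg_mulrn.
    rewrite /g' !omDl !omNl !omMnl !omxx vu uv !(@mul0rn 'I_p) subr0 addr0.
    by rewrite mulNrn /a /b !natr_Zp !subrr.
  have [x ex] := sp g' Kg'.
  exists (ins k a (b * p'.+1)%N x).
  rewrite Nn (@LC_ext _ _ (ins k u v (FF k l h e)) _ (ins k a (b * p'.+1)%N x)); last first.
    by move=> i _; rewrite FF_ins.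
  rewrite LC_ins; last by lia.
  rewrite -ex /g' mulrnA -oppQ.
  by rewrite addrC -addrA (addrCA (v *+ b)) subrr addr0 subrK.
- move=> x.
  rewrite Nn (@LC_ext _ _ (ins k u v (FF k l h e)) _ (ins k (x 0%N) (x k.+1) (fun i => if (i < k)%N then x i.+1 else x i.+2))); last first.
    by move=> i _; rewrite FF_ins -ins_split.
  rewrite LC_ins; last by lia.
  set y := (fun i => _); set S := LC _ _ y => e0.
  have Sz w : (forall i, (i < 2 * k + l)%N -> om (FF k l h e i) w = 0) -> om S w = 0.
    move=> H; rewrite /S om_LC big_nat_cond big1 // => i /andP [/andP [_ il] _].
    by rewrite H // mul0rn.
  have Su : om S u = 0 by apply: Sz => i il; have [_ []] := FK i il.
  have Sv : om S v = 0 by apply: Sz => i il; have [_ []] := FK i il.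
  have d0 : (p %| x 0%N)%N.
    apply: natZ0; have := congr1 (fun z => om z v) e0; rewrite /= !omDl om0l Sv addr0.
    by rewrite !omMnl uv omxx mul0rn addr0.
  have d1 : (p %| x k.+1)%N.
    apply: natZ0; have := congr1 (fun z => om z u) e0; rewrite /= !omDl om0l Su addr0.
    rewrite !omMnl vu omxx mul0rn add0r mulNrn => /eqP; rewrite oppr_eq0 => /eqP.
    done.
  have S0 : S = 0 by move: e0; rewrite (mulrn_dvd0 _ d0) (mulrn_dvd0 _ d1) !add0r.
  move=> i il; rewrite (ins_split k x i).
  case: (ins_cases k i) => [->|hi|->|hi]; rewrite ?ins_0 ?ins_mid //.
    by rewrite ins_lo //; apply: (ind y S0); lia.
  by rewrite ins_hi //; apply: (ind y S0); lia.
Qed.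

Theorem darboux N : forall K t, subg K -> reps K t N -> exists k l h e, Str K k l h e.
Proof.
elim/ltn_ind: N => N IH K t sK rK.
case: (classic (exists u w, K u /\ K w /\ om u w <> 0)) => [[u [w [Ku [Kw nz]]]]|nab]; last first.
  have [l [e [eK [esp ei]]]] := abel sK rK.
  have FE x : LC (2 * 0 + l) (FF 0 l (fun _ => 0) e) x = LC l e x.
    by rewrite muln0 add0n; apply: LC_ext => i _; rewrite /FF muln0 subn0.
  exists 0%N, l, (fun _ => 0), e; split; [by []|split; [by []|split; [by []|split; [by []|split]]]].
  - move=> i j il jl; apply: NNPP => ne; apply: nab.
    by exists (e i), (e j); split; [exact: eK|split; [exact: eK|]].
  - split; first by move=> g Kg; have [x ->] := esp g Kg; exists x; rewrite FE.
    by move=> x; rewrite FE => /ei H i; rewrite muln0 add0n => /H.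
set g0 := om u w.
have ng : ~~ (p %| g0)%N.
  apply/negP => d; apply: nz; apply: val_inj => /=.
  by move: d; rewrite /dvdn modn_small ?ltn_ord // => /eqP.
have [b hb] := inv_mod ng.
pose v := - (w *+ b).
case: (sK) => K0 [KD KN].
have Kv : K v by apply: KN; apply: subg_mulrn.
have uv : om u v = 1.
  rewrite /v omNr omMnr -/g0 -(natr_Zp g0) -mulrnA.
  have := natZ_dvd hb; rewrite natrD => /eqP; rewrite addr_eq0 => /eqP ->.
  by rewrite opprK.
pose K' := fun g => K g /\ om g u = 0 /\ om g v = 0.
have sK' : subg K'.
  split; first by rewrite /K' !om0l.
  split.
    move=> x y [Kx [xu xv]] [Ky [yu yv]]; split; first exact: KD.
    by rewrite !omDl xu yu xv yv addr0.
  by move=> x [Kx [xu xv]]; split; [exact: KN|rewrite !omNl xu xv oppr0].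
have [j0 j0N uj] := rK u Ku.
pose t' i := t (if (i < j0)%N then i else i.+1).
have rK' : reps K' t' N.-1.
  move=> g [Kg [gu gv]]; have [i iN gi] := rK g Kg.
  have ij : i != j0.
    apply/eqP => e1; move: gv; rewrite gi e1 -uj uv => /eqP; by rewrite oner_eq0.
  exists (if (i < j0)%N then i else i.-1).
    have := ij; rewrite neq_ltn => /orP h2.
    by case: ifP; lia.
  rewrite gi /t'; case: (ltnP i j0) => h1; first by rewrite h1.
  have h2 : (j0 < i)%N by move: ij; rewrite neq_ltn => /orP; lia.
  have -> : (i.-1 < j0)%N = false by lia.
  by congr t; lia.
have [k [l [h [e S]]]] := IH N.-1 ltac:(lia) K' t' sK' rK'.
exists k.+1, l, (ins k u v h), e; exact: pair_step.
Qed.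
End Darboux.

Lemma modp_eq_lemma p' a b : (a < p'.+2)%N -> (b < p'.+2)%N ->
  (p'.+2 %| a + b * p'.+1)%N -> a = b.
Proof.
move=> ap bp /dvdnP [q e].
have e2 : (a + b * p'.+2 = q * p'.+2 + b)%N by rewrite -e; lia.
have := congr1 (fun z => z %% p'.+2)%N e2.
by rewrite /= modnMDl addnC modnMDl !modn_small.
Qed.

Section Final.
Variables (G : group) (p' : nat) (M : G -> Prop) (c : nat -> G).
Local Notation p := p'.+2.
Local Notation "0g" := (gzero G).
Hypothesis pP : prime p.
Hypothesis c0nz : c 0 <> 0g.
Hypothesis cp0 : gmul p (c 0) = 0g.
Hypothesis cS : forall n, gmul p (c n.+1) = c n.
Hypothesis Mc : forall g, M g <-> exists n a, g = gmul a (c n).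
Hypothesis Mn : normal M.
Hypothesis Mab : abelian_sub M.
Hypothesis Mdiv : divisible_sub M.
Hypothesis nilp : nilpotent G.
Hypothesis topM : forall g, M (gmul p g).
Hypothesis topC : forall g h, M (comm g h).

Let M0 : M 0g. Proof. by case: Mn => [[]]. Qed.
Let MD x y : M x -> M y -> M (x +g y). Proof. by case: Mn => [[_ [HH _]] _]; apply: HH. Qed.
Let MN x : M x -> M (-g x). Proof. by case: Mn => [[_ [_ HH]] _]; apply: HH. Qed.
Let cen (g m : G) : M m -> m +g g = g +g m.
Proof. exact: (central pP cp0 cS Mc Mn Mab Mdiv nilp). Qed.
Let H : qhyp M := QH Mn topC.
Local Notation Q := (Qt H).

Lemma comm_anti (u v : G) : comm v u = -g comm u v.
Proof. by rewrite /comm !goppD !goppK !gaddA. Qed.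
Lemma commM_l (m z : G) : M m -> comm m z = 0g.
Proof. by move=> Mm; apply: gcommE; apply: cen. Qed.
Lemma commM_r (m z : G) : M m -> comm z m = 0g.
Proof. by move=> Mm; rewrite comm_anti commM_l ?gopp0. Qed.
Lemma comm_addl (a b z : G) : comm (a +g b) z = comm a z +g comm b z.
Proof.
have e : b +g z +g -g b = comm b z +g z by rewrite /comm gaddNKr.
have -> : comm (a +g b) z = a +g (b +g z +g -g b) +g -g a +g -g z.
  by rewrite /comm goppD !gaddA.
rewrite e; move: (topC b z); move: (comm b z) => C MC.
by rewrite gaddA -(cen a MC) -!gaddA (cen _ MC) /comm !gaddA.
Qed.
Lemma comm_mul n (a z : G) : comm (gmul n a) z = gmul n (comm a z).
Proof.
elim: n => [|n IH] /=; first by apply: commM_l.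
by rewrite comm_addl IH.
Qed.
Lemma comm_congl (x x' y : G) : cong M x x' -> comm x y = comm x' y.
Proof.
move=> cx; have -> : x' = x +g (-g x +g x') by rewrite gaddKr.
by rewrite comm_addl (commM_l _ cx) gadd0r.
Qed.
Lemma comm_cong (x x' y y' : G) : cong M x x' -> cong M y y' -> comm x y = comm x' y'.
Proof.
move=> cx cy; rewrite (comm_congl y cx) comm_anti (comm_congl x' cy) -comm_anti //.
Qed.

Lemma a1_mod n : gmul n (c 0) = gmul (n %% p) (c 0).
Proof. by rewrite {1}(divn_eq n p) gmulD gmulM cp0 gmul_zero gadd0. Qed.
Lemma a1_dvd n : gmul n (c 0) = 0g -> (p %| n)%N.
Proof.
move=> e; apply: contraT => nd.
have [b _] := Bezoutl n (isT : (0 < p)%N).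
have : coprime p n by rewrite prime_coprime.
rewrite /coprime => /eqP -> d.
have := cdvd0 cp0 cS (n := 0) d; rewrite gmulD gmul1 gmulM e gmul_zero gadd0r.
by [].
Qed.
Lemma a1_eq n m : gmul n (c 0) = gmul m (c 0) -> n = m %[mod p].
Proof.
wlog nm : n m / (n <= m)%N.
  by move=> W; case: (leqP n m) => h e; [apply: W|symmetry; apply: W => //; apply: ltnW].
move=> e; apply/eqP; rewrite eq_sym eqn_mod_dvd //; apply: a1_dvd.
apply: (@gaddIl _ (gmul n (c 0))); rewrite -gmulD subnKC // gadd0r //.
Qed.
Lemma ord_p (z : G) : M z -> gmul p z = 0g -> exists n, z = gmul n (c 0).
Proof.
move=> Mz; case: (cnorm pP cp0 cS Mc Mz) => [->|[u [t [cu ->]]]] pz.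
  by exists 0%N.
case: t pz => [|t] pz; first by exists u.
exfalso; move: pz; rewrite -gmulM mulnC gmulM cS => e.
have cm : coprime (p ^ t.+1) u by rewrite coprime_sym coprimeXr // coprime_sym.
have [a _] := Bezoutl u (expn_gt0 p t.+1 : (0 < p ^ t.+1)%N) .
rewrite (eqP cm) => /(cdvd0 cp0 cS); rewrite gmulD gmul1 gmulM e gmul_zero gadd0r => ct.
apply: c0nz; have := cpow cS t 0; rewrite add0n ct gmul_zero => <- //.
Qed.
Lemma om_ex (x y : G) : exists n, (n < p)%N /\ comm x y = gmul n (c 0).
Proof.
have pz : gmul p (comm x y) = 0g by rewrite -comm_mul; apply: commM_l.
have [n e] := ord_p (topC x y) pz.
by exists (n %% p)%N; split; [apply: ltn_pmod|rewrite e a1_mod].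
Qed.
Definition omG (x y : G) : nat := proj1_sig (cid (om_ex x y)).
Lemma omG_spec (x y : G) : comm x y = gmul (omG x y) (c 0).
Proof. exact: (proj2 (proj2_sig (cid (om_ex x y)))). Qed.
Definition om (a b : Q) : 'I_p := ((omG (qval a) (qval b))%:R)%R.
Lemma natZ_eq n m : n = m %[mod p] -> (n%:R : 'I_p)%R = (m%:R)%R.
Proof. by move=> e; apply: val_inj; rewrite !Zp_nat /= e. Qed.
Lemma om_char a b n : comm (qval a) (qval b) = gmul n (c 0) -> om a b = (n%:R)%R.
Proof. by rewrite omG_spec => /a1_eq; apply: natZ_eq. Qed.

Lemma qprojD' (x y : G) : qproj H (x +g y) = (qproj H x + qproj H y)%R.
Proof. exact: qprojD. Qed.
Lemma qproj0 : qproj H 0g = 0%R. Proof. by []. Qed.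
Lemma qproj_M (x : G) : M x <-> qproj H x = 0%R.
Proof.
split; first by move=> Mx; rewrite -qproj0; apply: qproj_eq; apply: cong_M.
by rewrite -qproj0 => /qproj_eq'; apply: cong_M'.
Qed.
Lemma qproj_mul n (x : G) : qproj H (gmul n x) = (qproj H x *+ n)%R.
Proof. by elim: n => [|n IH] //=; rewrite qprojD' IH GRing.mulrSr. Qed.
Lemma qproj_gsum n (f : nat -> G) : qproj H (gsum n f) = (\sum_(0 <= i < n) qproj H (f i))%R.
Proof.
elim: n => [|n IH] /=; first by rewrite big_geq.
by rewrite qprojD' IH big_nat_recr.
Qed.
Lemma qval_congr (a : Q) : qval a = qval (qproj H (qval a)). Proof. by rewrite qvalK. Qed.

Lemma qval_add (x y : Q) : cong M (qval (x + y)%R) (qval x +g qval y).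
Proof. exact: (qval_cong H (qval x +g qval y)). Qed.
Lemma omDl' (x y z : Q) : om (x + y)%R z = (om x z + om y z)%R.
Proof.
have e : comm (qval (x + y)%R) (qval z) = gmul (omG (qval x) (qval z) + omG (qval y) (qval z)) (c 0).
  by rewrite (comm_congl _ (qval_add x y)) comm_addl !omG_spec gmulD.
by rewrite (om_char e) GRing.natrD.
Qed.
Lemma omN' (x y : Q) : om y x = (- om x y)%R.
Proof.
have e : gmul (omG (qval y) (qval x) + omG (qval x) (qval y)) (c 0) = gmul 0 (c 0).
  by rewrite gmulD -!omG_spec comm_anti gaddN.
apply/eqP; rewrite -GRing.addr_eq0 /om -GRing.natrD; apply/eqP.
by rewrite (natZ_eq (a1_eq e)).
Qed.
Lemma omxx' (x : Q) : om x x = 0%R.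
Proof.
have e : comm (qval x) (qval x) = gmul 0 (c 0) by rewrite /comm gaddNK gaddNr.
by rewrite (om_char e).
Qed.
Lemma qproj_mulrn (x : Q) n : (x *+ n)%R = qproj H (gmul n (qval x)).
Proof. by rewrite qproj_mul qvalK. Qed.
Lemma charQ' (x : Q) : (x *+ p)%R = 0%R.
Proof. by rewrite qproj_mulrn; apply/qproj_M. Qed.

Lemma qprojN' (x : G) : qproj H (-g x) = (- qproj H x)%R.
Proof. exact: qprojN. Qed.

Lemma lift_ex (q : Q) : exists r, M r /\ gmul p r = gmul p (qval q).
Proof. exact: (Mdiv (topM (qval q)) (isT : (0 < p)%N)). Qed.
Definition liftr (q : Q) : G := proj1_sig (cid (lift_ex q)).
Lemma liftr_spec (q : Q) : M (liftr q) /\ gmul p (liftr q) = gmul p (qval q).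
Proof. exact: (proj2_sig (cid (lift_ex q))). Qed.
Definition lift (q : Q) : G := qval q +g -g liftr q.
Lemma lift_cong (q : Q) : cong M (lift q) (qval q).
Proof. by rewrite /cong /lift goppD goppK gaddNKr; case: (liftr_spec q). Qed.
Lemma lift_proj (q : Q) : qproj H (lift q) = q.
Proof. by rewrite (qproj_eq H (lift_cong q)) qvalK. Qed.
Lemma lift_p (q : Q) : gmul p (lift q) = 0g.
Proof.
case: (liftr_spec q) => Mr e.
rewrite /lift gmul_addC; last by symmetry; apply: cen; apply: MN.
by rewrite gmul_opp e gaddNr.
Qed.
Lemma lift_nz (q : Q) : q <> 0%R -> lift q <> 0g.
Proof. by move=> nq e; apply: nq; rewrite -(lift_proj q) e. Qed.
Lemma comm_lift (a b : Q) : comm (lift a) (lift b) = gmul (nat_of_ord (om a b)) (c 0).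
Proof.
rewrite (comm_cong (lift_cong a) (lift_cong b)) omG_spec a1_mod.
by rewrite /om Zp_nat.
Qed.
Lemma gsum_ext n (f g : nat -> G) : (forall i, (i < n)%N -> f i = g i) -> gsum n f = gsum n g.
Proof.
elim: n => [|n IH] e //=; rewrite e // IH // => i il; apply: e; exact: ltnW.
Qed.
Lemma LC_split k l (h e : nat -> Q) z :
  LC (2 * k + l) (FF k l h e) z =
  (\sum_(0 <= i < 2 * k) h i *+ z i + \sum_(0 <= i < l) e i *+ z (2 * k + i)%N)%R.
Proof.
rewrite /LC (@big_cat_nat _ _ _ (2 * k) 0 (2 * k + l)) ?leq_addr //=.
congr (_ + _)%R.
  by apply: eq_big_nat => i /andP [_ ik]; rewrite /FF ik.
rewrite -{1}[2 * k]add0n big_addn addKn; apply: eq_big_nat => i _.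
rewrite /FF; have -> : (i + 2 * k < 2 * k)%N = false by lia.
by rewrite addnK addnC.
Qed.

Lemma final : (exists n (t : nat -> G), forall g, exists2 i, (i < n)%N & M (-g t i +g g)) ->
  exists a1 : G, M a1 /\ has_order p a1 /\
  exists (k l : nat) (h e : nat -> G), Gk_times_Hl p M a1 k l h e.
Proof.
move=> [N [t rep]].
have rK : reps (fun _ : Q => True) (fun i => qproj H (t i)) N.
  move=> q _; have [i iN Mi] := rep (qval q); exists i => //.
  by rewrite -[q in LHS]qvalK; apply: qproj_eq; apply: cong_sym.
have sK : subg (fun _ : Q => True) by [].
have [k [l [h [e [_ [_ [hh [eh [ee [sp ind]]]]]]]]]] := darboux pP charQ' omDl' omN' omxx' sK rK.
have v1 : nat_of_ord (1 : 'I_p)%R = 1%N by rewrite -[1%R]/((1%:R : 'I_p)%R) Zp_nat /= modn_small.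
have Fnz : forall i, (i < 2 * k + l)%N -> FF k l h e i <> 0%R.
  move=> i il F0.
  have : LC (2 * k + l) (FF k l h e) (fun j => if j == i then 1 else 0)%N = 0%R.
    rewrite /LC big_nat_cond big1 // => j _; case: eqP => [->|_].
      by rewrite F0 GRing.mul0rn.
    by rewrite GRing.mulr0n.
  move/ind => /(_ i il); rewrite eqxx dvdn1 //.
have hnz : forall i, (i < 2 * k)%N -> h i <> 0%R.
  move=> i ik; have := Fnz i ltac:(lia); by rewrite /FF ik.
have enz : forall i, (i < l)%N -> e i <> 0%R.
  move=> i il; have := Fnz (2 * k + i)%N ltac:(lia); rewrite /FF.
  have -> : (2 * k + i < 2 * k)%N = false by lia.
  by rewrite addKn.
exists (c 0); split; first by apply/Mc; exists 0%N, 1%N; rewrite gmul1.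
split; first by split.
exists k, l, (fun i => lift (h i)), (fun i => lift (e i)).
split; [|split; [|split; [|split; [|split; [|split; [|split; [|split]]]]]]].
- by move=> i ik; split; [exact: lift_p|exact: lift_nz (hnz i ik)].
- by move=> i m ik Mm; rewrite (cen _ Mm).
- move=> i j ij jk /=; rewrite comm_lift hh //.
  by case: eqP => _; rewrite ?v1 ?gmul1.
- by move=> i il; split; [exact: lift_p|exact: lift_nz (enz i il)].
- by move=> i m il Mm; rewrite (cen _ Mm).
- by move=> i j il jk; apply: gcomm0; rewrite comm_lift eh.
- by move=> i j il jl; apply: gcomm0; rewrite comm_lift ee.
- move=> g; have [x ex] := sp (qproj H g) I.
  pose x' i := (x i %% p)%N.
  pose A := gsum (2 * k) (fun i => gmul (x' i) (lift (h i))).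
  pose B := gsum l (fun i => gmul (x' (2 * k + i)%N) (lift (e i))).
  have qA : qproj H A = (\sum_(0 <= i < 2 * k) h i *+ x' i)%R.
    by rewrite qproj_gsum; apply: eq_bigr => i _; rewrite qproj_mul lift_proj.
  have qB : qproj H B = (\sum_(0 <= i < l) e i *+ x' (2 * k + i)%N)%R.
    by rewrite qproj_gsum; apply: eq_bigr => i _; rewrite qproj_mul lift_proj.
  have qg : qproj H g = (qproj H A + qproj H B)%R.
    rewrite ex qA qB -LC_split; apply: eq_bigr => i _.
    by rewrite (mulrn_modp charQ').
  exists (g +g -g B +g -g A), x', (fun i => x' (2 * k + i)%N).
  split.
    apply/qproj_M; rewrite !qprojD' !qprojN' qg.
    by rewrite GRing.addrK GRing.subrr.
  split; first by move=> i; apply: ltn_pmod.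
  split; first by move=> i; apply: ltn_pmod.
  by rewrite gaddNKr gaddNKr.
- move=> m x y m' x' y' Mm Mm' xb yb x'b y'b eq.
  pose X i := if (i < 2 * k)%N then x i else y (i - 2 * k)%N.
  pose X' i := if (i < 2 * k)%N then x' i else y' (i - 2 * k)%N.
  have LX : forall (x y : nat -> nat),
      LC (2 * k + l) (FF k l h e) (fun i => if (i < 2 * k)%N then x i else y (i - 2 * k)%N) =
      qproj H (gsum (2 * k) (fun i => gmul (x i) (lift (h i)))
               +g gsum l (fun i => gmul (y i) (lift (e i)))).
    move=> x0 y0; rewrite LC_split qprojD' !qproj_gsum; congr (_ + _)%R.
      by apply: eq_big_nat => i /andP [_ ik]; rewrite ik qproj_mul lift_proj.
    apply: eq_bigr => i _; rewrite qproj_mul lift_proj.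
    have -> : (2 * k + i < 2 * k)%N = false by lia.
  by rewrite addKn.
  have eqQ : LC (2 * k + l) (FF k l h e) X = LC (2 * k + l) (FF k l h e) X'.
    rewrite /X /X' !LX; move/(congr1 (qproj H)): eq.
    rewrite -!gaddA !(qprojD' m) !(qprojD' m') (proj1 (qproj_M m) Mm) (proj1 (qproj_M m') Mm').
    by rewrite !GRing.add0r !qprojD'.
  have XX : forall i, (i < 2 * k + l)%N -> X i = X' i.
    move=> i il; apply: (@modp_eq_lemma p').
    - by rewrite /X; case: ifP.
    - by rewrite /X'; case: ifP.
    apply: (ind (fun i => X i + X' i * p'.+1)%N) => //.
    by rewrite -LC_add -(LC_opp charQ') eqQ GRing.subrr.
  have xx : forall i, (i < 2 * k)%N -> x i = x' i.
    by move=> i ik; have := XX i ltac:(lia); rewrite /X /X' ik.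
  have yy : forall i, (i < l)%N -> y i = y' i.
    move=> i il; have := XX (2 * k + i)%N ltac:(lia); rewrite /X /X'.
    have -> : (2 * k + i < 2 * k)%N = false by lia.
  by rewrite addKn.
  split; last by split.
  move: eq; rewrite (gsum_ext (g := fun i => gmul (x' i) (lift (h i)))); last first.
    by move=> i ik; rewrite xx.
  rewrite (gsum_ext (n := l) (g := fun i => gmul (y' i) (lift (e i)))); last first.
    by move=> i il; rewrite yy.
  by move/gaddIr/gaddIr.
Qed.
End Final.


Theorem proposition3p1 (p : nat) (G : group) (M : G -> Prop) :
  prime p ->
  nilpotent G ->
  normal M -> is_bottom M -> quasi_cyclic p M ->
  top_finite_elem_abelian p M ->
  exists a1 : G, M a1 /\ has_order p a1 /\
  exists (k l : nat) (h e : nat -> G), Gk_times_Hl p M a1 k l h e.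
Proof.
move=> pP nilp Mn [_ [Mab [Mdiv _]]] [c [c0nz [cp0 [cS Mc]]]] [rep [topM topC]].
destruct p as [|[|p']]; [by [] | by [] |].
exact: (final pP c0nz cp0 cS Mc Mn Mab Mdiv nilp topM topC rep).
Qed.
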